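(* Let $A = A_s + A_i\epsilon\in\mathbb{DR}^{m\times n}$ with $m\ge n$, let $k\le\min(m,n)$, and suppose $A_sP_s = Q_sR_s$, where $P_s\in\mathbb{R}^{n\times n}$ is a permutation matrix, $Q_s\in\mathbb{R}^{m\times k}$ has orthonormal columns, and $R_s = (r_{s_{ij}})\in\mathbb{R}^{k\times n}$ is upper trapezoidal (i.e. $r_{s_{ij}}=0$ for $i>j$) with $r_{s_{jj}}\neq 0$ for $j=1,\dots,k$. Then there exist $Q_i\in\mathbb{R}^{m\times k}$ and $R_i\in\mathbb{R}^{k\times n}$ such that $Q = Q_s + Q_i\epsilon$ satisfies $Q^{\top}Q = I_k$, $R = R_s + R_i\epsilon$ is upper trapezoidal, and $AP_s = QR$, if and only if $$(I_m - Q_sQ_s^{\top})A_iP_s(I_n - R_s^{\dagger}R_s) = O_{m\times n}.$$ In that case one such decomposition is obtained as follows: put $B = Q_s^{\top}A_iP_s = [b_1,\dots,b_n]$, define $P\in\mathbb{R}^{k\times k}$ with zero diagonal, strictly lower triangular part $$p_1(2{:}k) = b_1(2{:}k)/r_{s_{11}},\qquad p_j(j{+}1{:}k) = \Big(b_j(j{+}1{:}k) - \sum_{t=1}^{j-1} r_{s_{tj}}\,p_t(j{+}1{:}k)\Big)\Big/r_{s_{jj}},\quad j=2,\dots,k-1,$$ and $P^{\top}=-P$, and set $$Q_i = (I_m - Q_sQ_s^{\top})A_iP_sR_s^{\dagger} + Q_sP,\qquad R_i = Q_s^{\top}A_iP_s - PR_s.$$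
   Context: A dual number is $a = a_s + a_i\epsilon$ with $a_s,a_i\in\mathbb{R}$, where $\epsilon^2=0$, $\epsilon\neq 0$; $\mathbb{DR}^{m\times n}$ denotes the set of dual matrices $A = A_s + A_i\epsilon$ with $A_s, A_i\in\mathbb{R}^{m\times n}$. Products use $\epsilon^2=0$: $(A_s+A_i\epsilon)(B_s+B_i\epsilon) = A_sB_s + (A_sB_i + A_iB_s)\epsilon$. The transpose is $A^{\top}=A_s^{\top}+A_i^{\top}\epsilon$. A dual matrix is upper trapezoidal if both its standard and infinitesimal parts are upper trapezoidal (zero below the main diagonal). $M^{\dagger}$ denotes the Moore–Penrose pseudoinverse of a real matrix $M$. For a vector $v$, $v(a{:}b)$ is the subvector of entries $a$ through $b$. (In the paper, $A_sP_s=Q_sR_s$ arises from a randomized QR decomposition with column pivoting, but only the stated factorization properties are used.) *)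

(* Defs.v *)
From HB Require Import structures.
From mathcomp Require Import all_boot all_order all_algebra.
From mathcomp Require Import reals.
From Stdlib Require Import ClassicalEpsilon.
Set Implicit Arguments. Unset Strict Implicit. Unset Printing Implicit Defensive.
Import Order.TTheory GRing.Theory Num.Theory.
Local Open Scope ring_scope.

Section Defs.
Variable R : realType.

(* Dual matrices A = A_s + A_i eps, represented by the pair of parts. *)
Record dmx (m n : nat) := DMx { dstd : 'M[R]_(m, n); dinf : 'M[R]_(m, n) }.

Definition dmul m n p (A : dmx m n) (B : dmx n p) : dmx m p :=
  DMx (dstd A *m dstd B) (dstd A *m dinf B + dinf A *m dstd B).

Definition dtr m n (A : dmx m n) : dmx n m := DMx (dstd A)^T (dinf A)^T.

Definition did n : dmx n n := DMx 1%:M 0.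

Definition upper_trap m n (M : 'M[R]_(m, n)) : Prop :=
  forall (i : 'I_m) (j : 'I_n), (j < i)%N -> M i j = 0.

Definition dupper_trap m n (A : dmx m n) : Prop :=
  upper_trap (dstd A) /\ upper_trap (dinf A).

Definition penrose m n (M : 'M[R]_(m, n)) (X : 'M[R]_(n, m)) : Prop :=
  [/\ M *m X *m M = M, X *m M *m X = X,
      (M *m X)^T = M *m X & (X *m M)^T = X *m M].

Definition pinv m n (M : 'M[R]_(m, n)) : 'M[R]_(n, m) :=
  match excluded_middle_informative (exists X, penrose M X) with
  | left H => proj1_sig (constructive_indefinite_description _ H)
  | right _ => 0
  end.

(* entry of a matrix at natural-number indices (0 outside the range) *)
Definition mxe m n (M : 'M[R]_(m, n)) (i j : nat) : R :=
  match (insub i : option 'I_m), (insub j : option 'I_n) with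
  | Some i', Some j' => M i' j'
  | _, _ => 0
  end.

(* pcols B Rs j t i = p_t(i) (0-based) for columns t < j, as given by the
   recursion  p_t(i) = (b_t(i) - sum_{u<t} r_{u t} p_u(i)) / r_{t t}  for i > t,
   and 0 for i <= t. *)
Fixpoint pcols k n (B Rs : 'M[R]_(k, n)) (j : nat) : nat -> nat -> R :=
  match j with
  | 0 => fun _ _ => 0
  | j'.+1 =>
      let f := pcols B Rs j' in
      fun t i =>
        if (t < j')%N then f t i
        else if t == j' then
          (if (j' < i)%N then
             (mxe B i j' - \sum_(u < j') mxe Rs u j' * f u i) / mxe Rs j' j'
           else 0)
        else 0
  end.

Definition Pmat k n (B Rs : 'M[R]_(k, n)) : 'M[R]_k :=
  \matrix_(i < k, j < k)
    (if (j < i)%N then pcols B Rs k j i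
     else if (i < j)%N then - pcols B Rs k i j
     else 0).

End Defs.

(* Main.v *)
Require Import Defs.
From HB Require Import structures.
From mathcomp Require Import all_boot all_order all_algebra.
From mathcomp Require Import reals.
Import Order.TTheory GRing.Theory Num.Theory.
Local Open Scope ring_scope.
From Stdlib Require Import ClassicalEpsilon.
Set Implicit Arguments. Unset Strict Implicit.
Section H1s.
Variable R : realType.

Lemma mxeE m n (M : 'M[R]_(m, n)) (i : 'I_m) (j : 'I_n) : mxe M i j = M i j.
Proof. by rewrite /mxe !valK. Qed.

Lemma mxe_up m n (M : 'M[R]_(m, n)) (i j : nat) :
  upper_trap M -> (j < i)%N -> mxe M i j = 0.
Proof.
move=> U ji; rewrite /mxe; case: insubP => [i' _ ei|//]; case: insubP => [j' _ ej|//].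
by apply: U; rewrite ei ej.
Qed.

Lemma pcols_stable k n (B Rs : 'M[R]_(k, n)) j t i :
  (t < j)%N -> pcols B Rs j t i = pcols B Rs t.+1 t i.
Proof.
elim: j => [//|j IH] tj /=.
case: ltnP => [tj'|jt]; first by rewrite IH.
have -> : t = j by apply/eqP; rewrite eqn_leq jt -ltnS tj.
by rewrite /= ltnn eqxx.
Qed.


Lemma pcols_rec k n (B Rs : 'M[R]_(k, n)) t i :
  pcols B Rs t.+1 t i = if (t < i)%N then
    (mxe B i t - \sum_(u < t) mxe Rs u t * pcols B Rs u.+1 u i) / mxe Rs t t else 0.
Proof.
rewrite /= ltnn eqxx; case: ifP => // _; congr (( _ - _) / _).
by apply: eq_bigr => u _; rewrite (@pcols_stable k n B Rs t u i (ltn_ord u)).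
Qed.

Lemma mxeP k n (B Rs : 'M[R]_(k, n)) (i t : nat) :
  (t < i)%N -> (i < k)%N -> mxe (Pmat B Rs) i t = pcols B Rs t.+1 t i.
Proof.
move=> ti ik; have tk : (t < k)%N by apply: ltn_trans ik.
have -> : mxe (Pmat B Rs) i t = mxe (Pmat B Rs) (Ordinal ik) (Ordinal tk) by [].
rewrite -(@pcols_stable k n B Rs k t i tk).
by rewrite mxeE /Pmat mxE /= ti.
Qed.

Lemma key k n (B Rs : 'M[R]_(k, n)) (i j : nat) :
  upper_trap Rs -> (j < i)%N -> (i < k)%N -> mxe Rs j j != 0 ->
  \sum_(t < k) mxe (Pmat B Rs) i t * mxe Rs t j = mxe B i j.
Proof.
move=> U ji ik rnz.
have jk : (j.+1 <= k)%N by apply: ltn_trans ji ik.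
rewrite -(big_mkord xpredT (fun t => mxe (Pmat B Rs) i t * mxe Rs t j)) (big_cat_nat _ (n:=j.+1)) //=.
have -> : \sum_(j.+1 <= t < k) mxe (Pmat B Rs) i t * mxe Rs t j = 0.
  rewrite big_nat_cond big1 // => t /andP[/andP[jt _] _].
  by rewrite (mxe_up U jt) mulr0.
rewrite addr0 big_nat_recr // big_mkord (mxeP B Rs ji ik) pcols_rec ji.
rewrite (eq_bigr (fun t : 'I_j => mxe Rs t j * pcols B Rs t.+1 t i)); last first.
  move=> t _; rewrite mulrC mxeP //; apply: ltn_trans ji => //.
rewrite divfK //=; set S := \sum_(_ < _) _; by rewrite addrC subrK.
Qed.


End H1s.
Section H.
Variable R : realType.

Lemma rs_inj k n (Rs : 'M[R]_(k, n)) (u : 'rV[R]_k) :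
  (k <= n)%N -> upper_trap Rs ->
  (forall (i : 'I_k) (j : 'I_n), nat_of_ord i = nat_of_ord j -> Rs i j != 0) ->
  u *m Rs = 0 -> u = 0.
Proof.
move=> kn U D Hu.
have H : forall jn (t : 'I_k), nat_of_ord t = jn -> u 0 t = 0.
  elim/ltn_ind => jn IH t tj.
  have jn_n : (t < n)%N by apply: leq_trans (ltn_ord t) kn.
  have := congr1 (fun M : 'M[R]_(1, n) => M 0 (Ordinal jn_n)) Hu.
  rewrite mxE mxE (bigD1 t) //= big1 ?addr0.
    by move/eqP; rewrite mulf_eq0 (negbTE (D t (Ordinal jn_n) erefl)) orbF => /eqP.
  move=> s sne; case: (ltngtP s t) => [slt|sgt|seq].
  - by rewrite (IH s) ?mul0r // -tj.
  - by rewrite (U s (Ordinal jn_n)) ?mulr0.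
  - by case/eqP: sne; apply/val_inj.
apply/matrixP => a b; rewrite ord1 mxE; exact: H.
Qed.

Lemma penrose_ex k n (Rs : 'M[R]_(k, n)) :
  (k <= n)%N -> upper_trap Rs ->
  (forall (i : 'I_k) (j : 'I_n), nat_of_ord i = nat_of_ord j -> Rs i j != 0) ->
  exists X, penrose Rs X.
Proof.
move=> kn U D.
set M := Rs *m Rs^T.
have Minj : forall u : 'rV_k, u *m M = 0 -> u = 0.
  move=> u Hu; apply: (rs_inj kn U D).
  set v := u *m Rs.
  have : (v *m v^T) 0 0 = 0.
    by rewrite trmx_mul mulmxA -(mulmxA u) -/M Hu mul0mx mxE.
  rewrite mxE => /eqP; rewrite psumr_eq0; last by move=> j _; rewrite [v^T _ _]mxE -expr2 sqr_ge0.
  move/allP => Hall; apply/matrixP => a b; rewrite ord1 [RHS]mxE.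
  have := Hall b (mem_index_enum b); rewrite [v^T _ _]mxE -expr2 sqrf_eq0 => /eqP; done.
have Mu : M \in unitmx.
  rewrite -row_free_unit -kermx_eq0; apply/eqP/row_matrixP => i; rewrite row0.
  apply: Minj; apply/sub_kermxP; exact: row_sub.
have MT : M^T = M by rewrite /M trmx_mul trmxK.
exists (Rs^T *m invmx M).
have RX : Rs *m (Rs^T *m invmx M) = 1%:M by rewrite mulmxA -/M mulmxV.
split.
- by rewrite RX mul1mx.
- by rewrite -mulmxA RX mulmx1.
- by rewrite RX trmx1.
- by rewrite !trmx_mul trmxK trmx_inv MT mulmxA.
Qed.

Lemma pinvP m n (M : 'M[R]_(m, n)) : (exists X, penrose M X) -> penrose M (pinv M).
Proof.
move=> H; rewrite /pinv; case: excluded_middle_informative => // H'.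
exact: proj2_sig (constructive_indefinite_description _ H').
Qed.

End H.
Unset Implicit Arguments. Set Strict Implicit.
Theorem theorem3p3 (R : realType) (m n k : nat)
  (As Ai : 'M[R]_(m, n)) (Ps : 'M[R]_n) (Qs : 'M[R]_(m, k)) (Rs : 'M[R]_(k, n)) :
  (n <= m)%N -> (k <= minn m n)%N ->
  is_perm_mx Ps ->
  Qs^T *m Qs = 1%:M ->
  upper_trap Rs ->
  (forall (i : 'I_k) (j : 'I_n), nat_of_ord i = nat_of_ord j -> Rs i j != 0) ->
  As *m Ps = Qs *m Rs ->
  let A := DMx As Ai in
  let cond := fun Qi Ri =>
    let Q := DMx Qs Qi in
    let Rd := DMx Rs Ri in
    [/\ dmul (dtr Q) Q = did R k, dupper_trap Rd &
        dmul A (DMx Ps 0) = dmul Q Rd] in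
  ((exists (Qi : 'M[R]_(m, k)) (Ri : 'M[R]_(k, n)), cond Qi Ri) <->
   (1%:M - Qs *m Qs^T) *m Ai *m Ps *m (1%:M - pinv Rs *m Rs) = 0)
  /\
  ((1%:M - Qs *m Qs^T) *m Ai *m Ps *m (1%:M - pinv Rs *m Rs) = 0 ->
   let B := Qs^T *m Ai *m Ps in
   let P := Pmat B Rs in
   cond ((1%:M - Qs *m Qs^T) *m Ai *m Ps *m pinv Rs + Qs *m P)
        (Qs^T *m Ai *m Ps - P *m Rs)).
Proof.
move=> nm km Pp QQ U D E A cond.
have kn : (k <= n)%N by apply: leq_trans km (geq_minr _ _).
have [PR _ _ _] := pinvP (penrose_ex kn U D).
have QP : (1%:M - Qs *m Qs^T) *m Qs = 0.
  by rewrite mulmxBl mul1mx -mulmxA QQ mulmx1 subrr.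
have part2 : (1%:M - Qs *m Qs^T) *m Ai *m Ps *m (1%:M - pinv Rs *m Rs) = 0 ->
   let B := Qs^T *m Ai *m Ps in
   let P := Pmat B Rs in
   cond ((1%:M - Qs *m Qs^T) *m Ai *m Ps *m pinv Rs + Qs *m P)
        (Qs^T *m Ai *m Ps - P *m Rs).
  move=> H0 B P; split.
  - rewrite /dmul /dtr /did /=; congr DMx; first exact: QQ.
    set Y := (_ + Qs *m P).
    have QP' : Qs^T *m (1%:M - Qs *m Qs^T) = 0.
      by rewrite mulmxBr mulmx1 mulmxA QQ mul1mx subrr.
    have QiQ : Qs^T *m Y = P.
      by rewrite /Y mulmxDr !mulmxA QQ mul1mx QP' !mul0mx add0r.
    have T : Y^T *m Qs = P^T by rewrite -QiQ trmx_mul trmxK.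
    rewrite QiQ T; apply/matrixP => i j; rewrite !mxE.
    case: ltngtP => h; by rewrite ?addrN ?addNr ?addr0.
  - split; first exact: U.
    move=> i j ji.
    have jk : (j < k)%N := ltn_trans ji (ltn_ord i).
    have rnz : mxe Rs j j != 0 by rewrite (mxeE Rs (Ordinal jk) j); apply: D.
    have Ek : \sum_(t < k) P i t * Rs t j = B i j.
      rewrite -mxeE -(@key R k n B Rs i j U ji (ltn_ord i) rnz).
      by apply: eq_bigr => t _; rewrite !mxeE.
    rewrite /= mxE [X in _ + X]mxE [(P *m Rs) _ _]mxE Ek subrr.
    done.
  - rewrite /dmul /=; congr DMx; first exact: E.
    have H0' : (1%:M - Qs *m Qs^T) *m Ai *m Ps *m pinv Rs *m Rs = (1%:M - Qs *m Qs^T) *m Ai *m Ps.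
      move: H0; rewrite mulmxBr mulmx1 mulmxA => /eqP; rewrite subr_eq0 => /eqP <-. done.
    rewrite mulmx0 add0r [Qs *m (_ - _)]mulmxBr [(_ + Qs *m P) *m Rs]mulmxDl H0' [(1%:M - _) *m Ai]mulmxBl mul1mx !mulmxA mulmxBl.
    by rewrite addrCA subrK subrK.
split; last exact: part2.
split; last first.
  by move=> H0; exists ((1%:M - Qs *m Qs^T) *m Ai *m Ps *m pinv Rs + Qs *m Pmat (Qs^T *m Ai *m Ps) Rs), (Qs^T *m Ai *m Ps - Pmat (Qs^T *m Ai *m Ps) Rs *m Rs); exact: part2.
move=> [Qi [Ri [_ _ Heq]]].
have := congr1 (@dinf R m n) Heq; rewrite /= mulmx0 add0r => HC.
by rewrite -(mulmxA _ Ai Ps) HC [(1%:M - _) *m (_ + _)]mulmxDr !mulmxA QP mul0mx add0r -mulmxA [Rs *m (_ - _)]mulmxBr mulmx1 [Rs *m (_ *m _)]mulmxA PR subrr mulmx0.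
Qed.
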